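(* Let $k\ge1$, $a_i,b_i,c_i\in\mathbb{C}$ ($1\le i\le k$), with symbol $f$ and tridiagonal $k$-Toeplitz operator $T(f)$ as in the context. For $\lambda\in\mathbb{C}\setminus\sigma_{ess}(T(f))$ and $z\in\mathbb{C}\setminus\{0\}$, $$\det(f(z)-\lambda I)=(-1)^{k+1}\Big(\prod_{i=1}^kc_i\Big)z+(-1)^{k+1}\Big(\prod_{i=1}^kb_i\Big)z^{-1}+g(\lambda),$$ where $g(\lambda)=\det(A_0-\lambda I)-b_kc_k\,p(\lambda)$ is a polynomial in $\lambda$ of degree $k$, with $p(\lambda)=0$ if $k=1$, $p(\lambda)=1$ if $k=2$, and for $k\ge3$, $p(\lambda)$ the determinant of the $(k-2)\times(k-2)$ tridiagonal matrix with diagonal $a_2-\lambda,\dots,a_{k-1}-\lambda$, superdiagonal $b_2,\dots,b_{k-2}$ and subdiagonal $c_2,\dots,c_{k-2}$. In particular, there are at most $2k$ values $\lambda\in\mathbb{C}$ for which the equation $\det(f(z)-\lambda I)=0$ (in $z$) admits a double root.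
   Context: The tridiagonal $k$-Toeplitz operator $T(f)$ on $\ell^2(\mathbb{N})$ has matrix entries $(i,i)=a_{p(i)}$, $(i,i+1)=b_{p(i)}$, $(i+1,i)=c_{p(i)}$ with index map $i\mapsto((i-1)\bmod k)+1$, all other entries zero. Its symbol is $f(z)=A_{-1}z^{-1}+A_0+A_1z$, where $A_0$ is the $k\times k$ tridiagonal matrix with diagonal $a_1,\dots,a_k$, superdiagonal $b_1,\dots,b_{k-1}$, subdiagonal $c_1,\dots,c_{k-1}$; $A_{-1}$ has single nonzero entry $b_k$ at $(k,1)$; $A_1$ has single nonzero entry $c_k$ at $(1,k)$ (for $k=1$, $f(z)=a_1+c_1z+b_1z^{-1}$). $\sigma_{ess}$ denotes the essential spectrum. *)

(* Defs.v *)
From HB Require Import structures.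
From mathcomp Require Import all_boot all_order all_algebra.
From mathcomp Require Import complex.
From mathcomp Require Import reals.
Set Implicit Arguments. Unset Strict Implicit. Unset Printing Implicit Defensive.
Import Order.TTheory GRing.Theory Num.Theory.
Local Open Scope ring_scope.

Section Defs.
Variable R : realType.
Local Notation C := R[i].

(* Coefficients a b c : nat -> C are 1-indexed: a 1, ..., a k (values elsewhere irrelevant). *)

Definition tridiag (m : nat) (d u l : nat -> C) : 'M[C]_m :=
  \matrix_(i < m, j < m)
    if i == j :> nat then d i
    else if j == i.+1 :> nat then u i
    else if i == j.+1 :> nat then l j
    else 0.

Definition A0 (k : nat) (a b c : nat -> C) : 'M[C]_k :=
  tridiag k (fun i => a i.+1) (fun i => b i.+1) (fun i => c i.+1).

Definition Am1 (k : nat) (b : nat -> C) : 'M[C]_k :=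
  \matrix_(i < k, j < k) if (i == k.-1 :> nat) && (j == 0 :> nat) then b k else 0.

Definition A1 (k : nat) (c : nat -> C) : 'M[C]_k :=
  \matrix_(i < k, j < k) if (i == 0 :> nat) && (j == k.-1 :> nat) then c k else 0.

Definition symbol (k : nat) (a b c : nat -> C) (z : C) : 'M[C]_k :=
  z^-1 *: Am1 k b + A0 k a b c + z *: A1 k c.

Definition pfun (k : nat) (a b c : nat -> C) (l : C) : C :=
  if k == 1%N then 0
  else if k == 2%N then 1
  else \det (tridiag (k - 2) (fun i => a (i + 2)%N - l)
                             (fun i => b (i + 2)%N) (fun i => c (i + 2)%N)).

Definition gfun (k : nat) (a b c : nat -> C) (l : C) : C :=
  \det (A0 k a b c - l%:M) - b k * c k * pfun k a b c l.

Definition sqmod (x : C) : R := complex.Re x ^+ 2 + complex.Im x ^+ 2.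

(* square-summable sequences (0-indexed: x 0 is the first coordinate) *)
Definition l2 (x : nat -> C) : Prop :=
  exists M : R, forall N, \sum_(n < N) sqmod (x n) <= M.

Definition l2norm2_le (x : nat -> C) (e : R) : Prop :=
  forall N, \sum_(n < N) sqmod (x n) <= e.

(* T(f) - lambda I acting on sequences. Row n (0-indexed) is row n+1 of the
   paper's matrix, with period map p(i) = ((i-1) mod k) + 1. *)
Definition Tminus (k : nat) (a b c : nat -> C) (l : C) (x : nat -> C) : nat -> C :=
  fun n => (a (n %% k).+1 - l) * x n + b (n %% k).+1 * x n.+1
           + (if n is m.+1 then c (m %% k).+1 * x m else 0).

Definition lincomb (s : seq (nat -> C)) (co : nat -> C) : nat -> C :=
  fun n => \sum_(j < size s) co j * nth (fun _ => 0) s j n.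

(* T(f) - lambda I is Fredholm on l^2(N): finite dimensional kernel,
   closed range, finite dimensional cokernel *)
Definition Fredholm_Tminus (k : nat) (a b c : nat -> C) (l : C) : Prop :=
  [/\
      exists s : seq (nat -> C), (forall j, (j < size s)%N -> l2 (nth (fun _ => 0) s j)) /\
        forall x, l2 x -> Tminus k a b c l x = (fun _ => 0) ->
          exists co, x = lincomb s co,
      forall y, l2 y ->
        (forall e : R, 0 < e -> exists x, l2 x /\
            l2norm2_le (fun n => Tminus k a b c l x n - y n) e) ->
        exists x, l2 x /\ Tminus k a b c l x = y &
      exists s : seq (nat -> C), (forall j, (j < size s)%N -> l2 (nth (fun _ => 0) s j)) /\
        forall y, l2 y -> exists x co, l2 x /\
          y = (fun n => Tminus k a b c l x n + lincomb s co n)].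

Definition in_sigma_ess (k : nat) (a b c : nat -> C) (l : C) : Prop :=
  ~ Fredholm_Tminus k a b c l.

(* z0 is a double root (z0 <> 0) of the equation det(f(z) - lambda I) = 0:
   clearing denominators, z^m det(f(z) - lambda I) = P(z) on C\{0} for a
   polynomial P, and z0 is a root of P of multiplicity >= 2. *)
Definition double_root (k : nat) (a b c : nat -> C) (l z0 : C) : Prop :=
  z0 != 0 /\ exists (P : {poly C}) (m : nat),
    (forall z, z != 0 -> P.[z] = z ^+ m * \det (symbol k a b c z - l%:M)) /\
    (('X - z0%:P) ^+ 2 %| P)%R.

End Defs.

(* Main.v *)
Require Import Defs.
From HB Require Import structures.
From mathcomp Require Import all_boot all_order all_algebra.
From mathcomp Require Import complex.
From mathcomp Require Import reals.
From mathcomp Require Import ring lra zify.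
From Stdlib Require Import Classical.
Import Order.TTheory GRing.Theory Num.Theory.
Local Open Scope ring_scope.

Lemma det_add_delta (R : comNzRingType) n (A : 'M[R]_n) i j x :
  \det (A + x *: delta_mx i j) = \det A + x * cofactor A i j.
Proof.
have cofE j' : cofactor (A + x *: delta_mx i j) i j' = cofactor A i j'.
  rewrite /cofactor; congr (_ * \det _); apply/matrixP => r s.
  by rewrite !mxE eq_sym (negbTE (neq_lift i r)) /= mulr0 addr0.
rewrite (expand_det_row _ i) (expand_det_row A i).
under eq_bigr => j' _ do rewrite cofE !mxE eqxx /= mulrDl.
rewrite big_split /=; congr (_ + _).
rewrite (bigD1 j) //= eqxx mulr1 big1 ?addr0 // => j' /negbTE ->.
by rewrite mulr0 mul0r.
Qed.

Lemma char_poly_horner (R : comNzRingType) n (A : 'M[R]_n) l :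
  \det (A - l%:M) = (-1) ^+ n * (char_poly A).[l].
Proof.
rewrite /char_poly -[_.[l]]/(horner_eval l _) -det_map_mx.
rewrite -detZ; congr (\det _); apply/matrixP => i j.
rewrite !mxE /horner_eval /=; case: (i == j); by rewrite /= horner_evalE !hornerE; ring.
Qed.
Lemma poly_eq_nz (F : numFieldType) (p q : {poly F}) :
  (forall z, z != 0 -> p.[z] = q.[z]) -> p = q.
Proof.
move=> H; apply/eqP; rewrite -subr_eq0; apply/negPn/negP => nz.
pose rs : seq F := mkseq (fun i : nat => (i.+1)%:R) (size (p - q)).
have Hu : uniq rs.
  rewrite map_inj_uniq ?iota_uniq // => i j /eqP; rewrite eqr_nat => /eqP [] //.
have Hall : all (root (p - q)) rs.
  apply/allP => x /mapP [i _ ->]; rewrite /root hornerD hornerN H ?subrr //.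
  by rewrite pnatr_eq0.
by have := max_poly_roots nz Hall Hu; rewrite size_mkseq ltnn.
Qed.

Lemma roots_seq (F : idomainType) (p : {poly F}) :
  p != 0 -> exists s : seq F, (size s < size p)%N /\ forall x, root p x -> x \in s.
Proof.
move: {2}(size p) (leqnn (size p)) => n; elim: n p => [|n IH] p Hs nz.
  by move: nz; rewrite -size_poly_eq0; move: Hs; rewrite leqn0 => ->.
case: (classic (exists x, root p x)) => [[x /factor_theorem [q Hq]]|Hno]; last first.
  exists [::]; split; first by rewrite size_poly_gt0.
  by move=> x rx; exfalso; apply: Hno; exists x.
have qnz : q != 0 by apply: contraNneq nz; rewrite Hq => ->; rewrite mul0r.
have Hsz : size p = (size q).+1.
  by rewrite Hq size_Mmonic ?monicXsubC // size_XsubC addn2.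
have Hqn : (size q <= n)%N by move: Hs; rewrite Hsz.
have [s [Hs1 Hs2]] := IH q Hqn qnz.
exists (x :: s); split; first by rewrite Hsz /=.
move=> y; rewrite {1}/root Hq hornerM hornerXsubC mulf_eq0 subr_eq0 in_cons orbC.
case/orP => [->//|ry]; by rewrite (Hs2 y ry) orbT.
Qed.

Section Main.
Variable R : realType.
Local Notation C := R[i].

Lemma bump0 i : bump 0 i = i.+1. Proof. by []. Qed.
Lemma bumpmax n (i : 'I_n) : bump n i = i.
Proof. by rewrite /bump leqNgt ltn_ord. Qed.
Lemma bumpS n (i : 'I_n) : bump n.+1 i.+1 = i.+1.
Proof. by rewrite /bump ltnNge ltn_ord. Qed.

Ltac solve_ent := rewrite -?val_eqE ?lift0 ?lift_max /= ?bump0 ?bumpmax ?bumpS; repeat (case: eqP => ?); try lia; rewrite /= ?mulr0n ?subr0; try done.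

Lemma symbol_decomp n (a b c : nat -> C) z l :
  symbol n.+2 a b c z - l%:M =
  (A0 n.+2 a b c - l%:M + (z^-1 * b n.+2) *: delta_mx ord_max ord0)
   + (z * c n.+2) *: delta_mx ord0 ord_max.
Proof.
apply/matrixP => i j; rewrite !mxE -!val_eqE /=.
by do 2 case: (_ && _); rewrite /=; ring.
Qed.


Lemma T_entry k (a b c : nat -> C) l (i j : 'I_k) :
  (A0 k a b c - l%:M) i j =
  (if i == j :> nat then a i.+1 else if j == i.+1 :> nat then b i.+1
   else if i == j.+1 :> nat then c j.+1 else 0) - l *+ (i == j :> nat).
Proof. by rewrite !mxE. Qed.

Lemma det_m1 n (a b c : nat -> C) l :
  \det (row' ord0 (col' ord_max (A0 n.+2 a b c - l%:M))) = \prod_(i < n.+1) c i.+1.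
Proof.
rewrite -det_tr det_trig.
  by apply: eq_bigr => i _; rewrite !mxE; solve_ent.
apply/is_trig_mxP => i j /= lt; rewrite !mxE; solve_ent.
Qed.

Lemma det_m2 n (a b c : nat -> C) l :
  \det (row' ord_max (col' ord0 (A0 n.+2 a b c - l%:M))) = \prod_(i < n.+1) b i.+1.
Proof.
rewrite (@det_trig _ n.+1).
  by apply: eq_bigr => i _; rewrite !mxE; solve_ent.
apply/is_trig_mxP => i j /= lt; rewrite !mxE; solve_ent.
Qed.

Lemma det_mid n (a b c : nat -> C) l :
  \det (row' ord_max (col' ord0 (row' ord0 (col' ord_max (A0 n.+2 a b c - l%:M)))))
  = pfun n.+2 a b c l.
Proof.
have -> : pfun n.+2 a b c l = \det (tridiag n (fun i => a (i + 2)%N - l)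
                             (fun i => b (i + 2)%N) (fun i => c (i + 2)%N)).
  by case: n => [|n]; rewrite /pfun //= det_mx00.
congr (\det _); apply/matrixP => i j; rewrite !mxE ?lift0 ?lift_max /= !addn2 !eqSS.
solve_ent.
Qed.


Lemma minor_shift n (T : 'M[C]_n.+2) y :
  row' ord0 (col' ord_max (T + y *: delta_mx ord_max ord0)) =
  row' ord0 (col' ord_max T) + y *: delta_mx ord_max ord0.
Proof.
apply/matrixP => i j; rewrite !mxE -!val_eqE /= ?bump0 ?bumpmax.
by rewrite eqSS.
Qed.

Lemma prod_shift (f : nat -> C) n :
  \prod_(1 <= i < n.+3) f i = (\prod_(i < n.+1) f i.+1) * f n.+2.
Proof. by rewrite big_nat_recr //= big_add1 /= big_mkord. Qed.

Lemma det_symbol2 n (a b c : nat -> C) z l : z != 0 ->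
  \det (symbol n.+2 a b c z - l%:M) =
       (-1) ^+ n.+3 * (\prod_(1 <= i < n.+3) c i) * z
     + (-1) ^+ n.+3 * (\prod_(1 <= i < n.+3) b i) * z^-1
     + gfun n.+2 a b c l.
Proof.
move=> z0.
rewrite symbol_decomp !det_add_delta {2}/cofactor minor_shift det_add_delta.
rewrite /cofactor det_m1 det_m2 det_mid /gfun !prod_shift.
rewrite /= !add0n !addn0 !exprS.
set s := (-1) ^+ n.
set P1 := \prod_(i < n.+1) c i.+1.
set P2 := \prod_(i < n.+1) b i.+1.
have hs : s * s = 1 by rewrite /s -exprMn mulrNN mulr1 expr1n.
have hw : z * z^-1 = 1 by rewrite mulfV.
set w := z^-1 in hw *.
apply/eqP; rewrite -subr_eq0; apply/eqP.
rewrite [X in X = 0](_ : _ = - (b n.+2 * c n.+2 * pfun n.+2 a b c l) * (s * s * (z * w) - 1)).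
  by rewrite hs hw mulr1 subrr mulr0.
rewrite /= /w; ring.
Qed.



Lemma det_symbol1 (a b c : nat -> C) z l :
  \det (symbol 1 a b c z - l%:M) =
       (-1) ^+ 2 * (\prod_(1 <= i < 2) c i) * z
     + (-1) ^+ 2 * (\prod_(1 <= i < 2) b i) * z^-1
     + gfun 1 a b c l.
Proof.
rewrite det_mx11 /gfun det_mx11 /pfun /= !big_nat1 !mxE /=; ring.
Qed.

Lemma det_symbol k (a b c : nat -> C) z l : (0 < k)%N -> z != 0 ->
  \det (symbol k a b c z - l%:M) =
       (-1) ^+ k.+1 * (\prod_(1 <= i < k.+1) c i) * z
     + (-1) ^+ k.+1 * (\prod_(1 <= i < k.+1) b i) * z^-1
     + gfun k a b c l.
Proof.
case: k => [//|[|n]] _ z0; first exact: det_symbol1.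
exact: det_symbol2.
Qed.

Lemma pfunE n (a b c : nat -> C) l : pfun n.+2 a b c l = \det (tridiag n (fun i => a (i + 2)%N - l)
                             (fun i => b (i + 2)%N) (fun i => c (i + 2)%N)).
Proof. by case: n => [|n]; rewrite /pfun //= det_mx00. Qed.

Lemma gpoly k (a b c : nat -> C) : (0 < k)%N ->
  exists G : {poly C}, size G = k.+1 /\ forall l, G.[l] = gfun k a b c l.
Proof.
move=> k0.
have [Q [HQs HQ]] : exists Q : {poly C}, (size Q <= k)%N /\ forall l, Q.[l] = pfun k a b c l.
  case: k k0 => [//|[|n]] _.
    by exists 0; rewrite size_poly0; split => // l; rewrite horner0.
  exists ((-1) ^+ n *: char_poly (tridiag n (fun i => a (i + 2)%N)
                             (fun i => b (i + 2)%N) (fun i => c (i + 2)%N))).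
  split; first by rewrite (leq_trans (size_scale_leq _ _)) // size_char_poly.
  move=> l; rewrite hornerZ -char_poly_horner pfunE; congr (\det _).
  apply/matrixP => i j; rewrite !mxE -val_eqE /=; case: eqP => _; rewrite /= ?mulr1n ?mulr0n ?subr0 //.
exists ((-1) ^+ k *: char_poly (A0 k a b c) - (b k * c k) *: Q); split.
  rewrite size_polyDl size_scale ?signr_eq0 ?size_char_poly //.
  by rewrite size_polyN (leq_ltn_trans (size_scale_leq _ _)) // size_scale ?signr_eq0 ?size_char_poly.
move=> l; rewrite hornerD hornerN !hornerZ HQ -char_poly_horner /gfun //.
Qed.

Lemma aux1 (F : comNzRingType) (z w Cc Bb g zm : F) :
  z * (zm * (Cc * z + Bb * w + g)) - zm * (Cc * (z * z) + g * z + Bb) = (zm * Bb) * (z * w - 1).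
Proof. ring. Qed.

Lemma aux2 (F : comNzRingType) (Cc Bb g z : F) :
  Cc * z ^+ 2 + g * z + Bb = 0 -> Cc * (z *+ 2) + g = 0 -> g ^+ 2 = 4%:R * Cc * Bb.
Proof.
move=> e1 e2; apply/eqP; rewrite -subr_eq0; apply/eqP.
rewrite [LHS](_ : _ = (Cc * (z *+ 2) + g) * (g - 2%:R * Cc * z)
   - 4%:R * Cc * (Cc * z ^+ 2 + g * z + Bb) + 4%:R * Cc * z * (Cc * (z *+ 2) + g)).
  by rewrite e1 e2 !(mulr0, mul0r) subr0 addr0.
ring.
Qed.

Lemma dr_cond k (a b c : nat -> C) l z0 : (0 < k)%N ->
  double_root k a b c l z0 ->
  gfun k a b c l ^+ 2 = 4%:R * ((-1) ^+ k.+1 * (\prod_(1 <= i < k.+1) c i))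
                        * ((-1) ^+ k.+1 * (\prod_(1 <= i < k.+1) b i)).
Proof.
move=> k0 [z0nz [P [m [HP Hd]]]].
set Cc := (-1) ^+ k.+1 * _; set Bb := (-1) ^+ k.+1 * _; set g := gfun k a b c l.
pose Q : {poly C} := Cc *: 'X^2 + g *: 'X + Bb%:P.
have HQ : 'X * P = 'X ^+ m * Q.
  apply: poly_eq_nz => z zn0; rewrite !(hornerM, hornerD, hornerZ, hornerXn, hornerX, hornerC) HP // det_symbol // -/Cc -/Bb -/g.
  have hw : z * z^-1 = 1 by rewrite mulfV.
  set w := z^-1 in hw *.
  apply/eqP; rewrite -subr_eq0; apply/eqP.
  rewrite [X in X = 0](_ : _ = (z ^+ m * Bb) * (z * w - 1)); first by rewrite hw subrr mulr0.
  ring.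
have Hd2 : ('X - z0%:P) ^+ 2 %| Q.
  have cop : coprimep (('X - z0%:P) ^+ 2) ('X ^+ m).
    apply: coprimep_expl; apply: coprimep_expr; rewrite coprimep_sym coprimep_XsubC.
    by rewrite rootX.
  by rewrite -(Gauss_dvdpr _ cop) -HQ dvdp_mull.
have [h Hh] := dvdpP _ _ Hd2.
have e1 : Q.[z0] = 0.
  by rewrite Hh hornerM horner_exp hornerXsubC subrr expr0n mulr0.
have e2 : (Q^`()).[z0] = 0.
  rewrite Hh expr2 !derivM derivXsubC !(hornerXsubC, hornerM, hornerD) subrr.
  by rewrite !(mulr0, mul0r, addr0, add0r).
move: e1 e2; rewrite /Q !derivD !derivZ derivXn derivX derivC.
rewrite !hornerD !hornerZ hornerMn !hornerXn hornerC -polyC1 !hornerC expr1 mulr1 addr0.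
exact: (@aux2 C).
Qed.

End Main.


Theorem lemmaA1 (R : realType) (k : nat) (a b c : nat -> R[i]) :
  (0 < k)%N ->
  (exists G : {poly R[i]}, size G = k.+1 /\ forall l, G.[l] = gfun k a b c l) /\
  (forall l z : R[i], ~ in_sigma_ess k a b c l -> z != 0 ->
     \det (symbol k a b c z - l%:M) =
       (-1) ^+ k.+1 * (\prod_(1 <= i < k.+1) c i) * z
     + (-1) ^+ k.+1 * (\prod_(1 <= i < k.+1) b i) * z^-1
     + gfun k a b c l) /\
  (exists s : seq R[i], (size s <= 2 * k)%N /\
     forall l, (exists z0, double_root k a b c l z0) -> l \in s).
Proof.
move=> k0; split; first exact: gpoly.
split; first by move=> l z _ z0; exact: det_symbol.
have [G [HGs HG]] := @gpoly R k a b c k0.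
pose H := G ^+ 2 - (4%:R * ((-1) ^+ k.+1 * (\prod_(1 <= i < k.+1) c i))
                        * ((-1) ^+ k.+1 * (\prod_(1 <= i < k.+1) b i)))%:P.
have G2 : size (G ^+ 2) = (2 * k).+1.
  have nz : G ^+ 2 != 0 by rewrite expf_neq0 // -size_poly_gt0 HGs.
  have pos : (0 < size (G ^+ 2))%N by rewrite size_poly_gt0.
  by rewrite -(prednK pos) size_exp HGs mulnC.
have Hs : size H = (2 * k).+1.
  rewrite size_polyDl G2 // size_polyN (leq_ltn_trans (size_polyC_leq1 _)) //.
  by rewrite ltnS muln_gt0.
have Hnz : H != 0 by rewrite -size_poly_eq0 Hs.
have [s [Hss Hsr]] := @roots_seq _ H Hnz.
exists s; split; first by rewrite -ltnS -Hs.
move=> l [z0 Hdr]; apply: Hsr.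
by rewrite /root /H hornerD hornerN horner_exp HG hornerC (@dr_cond R k a b c l z0 k0 Hdr) subrr.
Qed.
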